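(* Consider the TVFJ dynamics described in the context, and suppose the system is asymptotically stable. Let $\mathbf x_0\in[0,1]^n$ and let $\omega(\mathbf x_0)$ be the $\omega$-limit set of the trajectory with $\mathbf x[0]=\mathbf x_0$. Then for every $\mathbf x^*\in\omega(\mathbf x_0)$ and every $i$, \[ \min_j s_j\le x_i^*\le\max_j s_j . \]
   Context: There are $n$ agents with opinions $\mathbf x[t]$ and innate opinions $\mathbf s\in[0,1]^n$, evolving by $\mathbf x[t+1]=\Lambda[t]W[t]\mathbf x[t]+(I-\Lambda[t])\mathbf s$, with $W[t]$ row-stochastic and $\Lambda[t]=\mathrm{diag}(\lambda_1[t],\dots,\lambda_n[t])$, $\lambda_i[t]\in[0,1]$. Standing assumptions: $\lambda_i[t]=0$ iff $w_{ij}[t]=0$ for all $j$; there is no $\tau$ with $\Lambda[\tau]=0$. The state transition matrix is $\Phi(t,\tau)=\Lambda[t-1]W[t-1]\cdots\Lambda[\tau]W[\tau]$ for $t>\tau$, $\Phi(\tau,\tau)=I$. The system is asymptotically stable if $\lim_{t\to\infty}\|\Phi(t,\tau)\|=0$ for all $\tau\ge0$, where $\|A\|:=\max_i\sum_j|a_{ij}|$. The $\omega$-limit set is $\omega(\mathbf x_0)=\{\mathbf y:\exists\,t_k\to\infty,\ \mathbf x[t_k]\to\mathbf y\}$. *)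

(* Defs.v *)
From HB Require Import structures.
From mathcomp Require Import all_boot all_order all_algebra.
From mathcomp Require Import all_classical all_reals all_analysis.
Set Implicit Arguments. Unset Strict Implicit. Unset Printing Implicit Defensive.
Import Order.TTheory GRing.Theory Num.Theory.
Import numFieldNormedType.Exports.
Local Open Scope classical_set_scope.
Local Open Scope ring_scope.

Definition row_stochastic (R : realType) (n : nat) (A : 'M[R]_n) : Prop :=
  (forall i j, 0 <= A i j) /\ (forall i, \sum_j A i j = 1).

Definition infnorm (R : realType) (n : nat) (A : 'M[R]_n) : R :=
  \big[Num.max/0]_i \sum_j `|A i j|.

Definition Lam (R : realType) (n : nat) (lam : nat -> 'rV[R]_n) (t : nat)
  : 'M[R]_n := diag_mx (lam t).

Fixpoint PhiK (R : realType) (n : nat) (lam : nat -> 'rV[R]_n)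
  (W : nat -> 'M[R]_n) (tau k : nat) : 'M[R]_n :=
  match k with
  | 0 => 1%:M
  | k'.+1 => Lam lam (tau + k') *m W (tau + k') *m PhiK lam W tau k'
  end.

(* State transition matrix Phi(t, tau) for t >= tau (identity otherwise;
   only t >= tau is ever used). *)
Definition Phi (R : realType) (n : nat) (lam : nat -> 'rV[R]_n)
  (W : nat -> 'M[R]_n) (t tau : nat) : 'M[R]_n :=
  if (tau <= t)%N then PhiK lam W tau (t - tau) else 1%:M.

Definition asymp_stable (R : realType) (n : nat) (lam : nat -> 'rV[R]_n)
  (W : nat -> 'M[R]_n) : Prop :=
  forall tau : nat, (fun t : nat => infnorm (Phi lam W t tau)) @ \oo --> (0 : R).

Fixpoint traj (R : realType) (n : nat) (lam : nat -> 'rV[R]_n)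
  (W : nat -> 'M[R]_n) (s x0 : 'cV[R]_n) (t : nat) : 'cV[R]_n :=
  match t with
  | 0 => x0
  | t'.+1 => Lam lam t' *m W t' *m traj lam W s x0 t'
             + (1%:M - Lam lam t') *m s
  end.

(* omega-limit set: y such that x[t_k] -> y along some t_k -> oo
   (convergence entrywise, equivalent to any norm in finite dimension). *)
Definition omega_limit (R : realType) (n : nat) (x : nat -> 'cV[R]_n)
  (y : 'cV[R]_n) : Prop :=
  exists tk : nat -> nat,
    (forall N : nat, exists k0 : nat, forall k, (k0 <= k)%N -> (N <= tk k)%N) /\
    (forall i : 'I_n, (fun k : nat => x (tk k) i 0) @ \oo --> y i 0).

(* Main.v *)
Require Import Defs.
From HB Require Import structures.
From mathcomp Require Import all_boot all_order all_algebra.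
From mathcomp Require Import all_classical all_reals all_analysis.
From mathcomp Require Import ring lra.
Import Order.TTheory GRing.Theory Num.Theory.
Local Open Scope ring_scope.

Local Open Scope classical_set_scope.
Local Open Scope ring_scope.
Import numFieldNormedType.Exports.
Section S.
Variables (R : realType) (n : nat) (W : nat -> 'M[R]_n) (lam : nat -> 'rV[R]_n).

Lemma LWv t (v : 'cV[R]_n) i :
  (Lam lam t *m W t *m v) i 0 = lam t 0 i * \sum_j W t i j * v j 0.
Proof. by rewrite -mulmxA /Lam mul_diag_mx !mxE. Qed.

Lemma Ls t (s : 'cV[R]_n) i :
  ((1%:M - Lam lam t) *m s) i 0 = (1 - lam t 0 i) * s i 0.
Proof. by rewrite mulmxBl mul1mx /Lam mul_diag_mx !mxE mulrBl mul1r. Qed.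

Lemma traj_opp s x0 t : traj lam W (- s) (- x0) t = - traj lam W s x0 t.
Proof.
elim: t => [|t IH] //=. by rewrite IH !mulmxN opprD.
Qed.

Lemma infnorm_ge (A : 'M[R]_n) i : \sum_j `|A i j| <= infnorm A.
Proof. by rewrite /infnorm [X in _ <= X](bigD1 i) //= le_max lexx. Qed.

Lemma upper_bound (s x0 : 'cV[R]_n) (M : R) :
  (forall t, row_stochastic (W t)) ->
  (forall t (i : 'I_n), 0 <= lam t 0 i <= 1) ->
  (forall j, s j 0 <= M) ->
  forall t i, traj lam W s x0 t i 0 - M <=
     (PhiK lam W 0 t *m (\col_j (x0 j 0 - M))) i 0.
Proof.
move=> HW Hl HM; elim=> [|t IH] i /=.
  by rewrite mul1mx mxE.
rewrite add0r.
rewrite [X in _ <= X](_ : _ = (Lam lam t *m W t *m (PhiK lam W 0 t *m \col_j (x0 j 0 - M))) i 0); last by rewrite !mulmxA.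
rewrite LWv (mxE _ _ i 0) Ls LWv.
have [HW0 HW1] := HW t.
have [l0 l1] := andP (Hl t i).
have E : \sum_j W t i j * traj lam W s x0 t j 0 =
   \sum_j W t i j * (traj lam W s x0 t j 0 - M) + M.
  under [X in _ = X + _]eq_bigr do rewrite mulrBr.
  by rewrite sumrB -mulr_suml HW1 mul1r subrK.
rewrite E.
have H1 : (1 - lam t 0 i) * s i 0 - (1 - lam t 0 i) * M <= 0.
  by rewrite -mulrBr mulr_ge0_le0 ?subr_ge0 ?subr_le0.
have H2 : \sum_j W t i j * (traj lam W s x0 t j 0 - M) <=
          \sum_j W t i j * (PhiK lam W 0 t *m \col_j (x0 j 0 - M)) j 0.
  by apply: ler_sum => j _; apply: ler_wpM2l.
have H3 := ler_wpM2l l0 H2.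
have -> : lam t 0 i * (\sum_j W t i j * (traj lam W s x0 t j 0 - M) + M) +
    (1 - lam t 0 i) * s i 0 - M =
    lam t 0 i * (\sum_j W t i j * (traj lam W s x0 t j 0 - M)) +
    ((1 - lam t 0 i) * s i 0 - (1 - lam t 0 i) * M).
  by rewrite mulrDr mulrBl mul1r; lra.
lra.
Qed.

Lemma Pv_bound (A : 'M[R]_n) (u : 'cV[R]_n) i :
  (A *m u) i 0 <= infnorm A * \sum_j `|u j 0|.
Proof.
rewrite mxE.
apply: le_trans (_ : \sum_j `|A i j| * \sum_k `|u k 0| <= _); last first.
  rewrite -mulr_suml; apply: ler_wpM2r; first by apply: sumr_ge0 => *.
  exact: infnorm_ge.
apply: ler_sum => j _.
apply: le_trans (ler_norm _) _.
rewrite normrM; apply: ler_wpM2l => //.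
by rewrite (bigD1 j) //= lerDl sumr_ge0.
Qed.


Lemma omega_upper (s x0 : 'cV[R]_n) (M : R) :
  (forall t, row_stochastic (W t)) ->
  (forall t (i : 'I_n), 0 <= lam t 0 i <= 1) ->
  (forall j, s j 0 <= M) ->
  asymp_stable lam W ->
  forall tk : nat -> nat,
    (forall N : nat, exists k0 : nat, forall k, (k0 <= k)%N -> (N <= tk k)%N) ->
  forall i (y : R), (fun k : nat => traj lam W s x0 (tk k) i 0) @ \oo --> y ->
  y <= M.
Proof.
move=> HW Hl HM Has tk Htk i y Hy.
rewrite leNgt; apply/negP => HyM.
set d := y - M.
have d0 : 0 < d by rewrite subr_gt0.
set C := \sum_j `|(\col_j (x0 j 0 - M)) j 0|.
have C0 : 0 <= C by apply: sumr_ge0 => *.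
set eps := d / (2 * (C + 1)).
have eps0 : 0 < eps by apply: divr_gt0 => //; lra.
have epsE : eps * (C + 1) = d / 2.
  rewrite /eps; field; lra.
have [N1 _ HN1] := (cvgrPdist_lt _ _).1 (Has 0%N) eps eps0.
have d20 : 0 < d / 2 by lra.
have [k1 _ Hk1] := (cvgrPdist_lt _ _).1 Hy (d / 2) d20.
have [k0 Hk0] := Htk N1.
set k := maxn k0 k1.
have A1 := HN1 (tk k) (Hk0 k (leq_maxl _ _)).
have A2 := Hk1 k (leq_maxr _ _).
have B := @upper_bound s x0 M HW Hl HM (tk k) i.
have B2 := Pv_bound (PhiK lam W 0 (tk k)) (\col_j (x0 j 0 - M)) i.
move: A1; rewrite /Phi leq0n subn0 sub0r normrN => A1.
have A1' : infnorm (PhiK lam W 0 (tk k)) < eps by apply: le_lt_trans (ler_norm _) A1.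
have B3 : infnorm (PhiK lam W 0 (tk k)) * C <= eps * C by apply: ler_wpM2r => //; exact: ltW.
move: A2; rewrite ltr_norml => /andP [A2 A3].
rewrite -/C in B2.
have : eps * C < d / 2 by nra.
rewrite /d in A2 A3 d20 *; lra.
Qed.
End S.

Theorem corollary2 (R : realType) (n : nat)
  (W : nat -> 'M[R]_n) (lam : nat -> 'rV[R]_n) (s x0 : 'cV[R]_n) :
  (forall t, row_stochastic (W t)) ->
  (forall t (i : 'I_n), 0 <= lam t 0 i <= 1) ->
  (forall t (i : 'I_n), lam t 0 i = 0 <-> (forall j : 'I_n, W t i j = 0)) ->
  (forall t, ~ (forall i : 'I_n, lam t 0 i = 0)) ->
  (forall i : 'I_n, 0 <= s i 0 <= 1) ->
  asymp_stable lam W ->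
  (forall i : 'I_n, 0 <= x0 i 0 <= 1) ->
  forall xs : 'cV[R]_n, omega_limit (traj lam W s x0) xs ->
  forall i : 'I_n,
    \big[Num.min/s i 0]_(j < n) s j 0 <= xs i 0 <= \big[Num.max/s i 0]_(j < n) s j 0.
Proof.
move=> HW Hl _ _ _ Has _ xs [tk [Htk Hc]] i.
apply/andP; split.
  rewrite -lerN2.
  apply: (@omega_upper R n W lam (- s) (- x0) _ HW Hl _ Has tk Htk i).
    move=> j; rewrite mxE lerN2.
    by rewrite [X in X <= _](bigD1 j) //= ge_min lexx.
  have -> : (fun k => traj lam W (-s) (-x0) (tk k) i 0) =
     (fun k => - traj lam W s x0 (tk k) i 0).
    by apply: funext => k; rewrite traj_opp mxE.
  exact: cvgN (Hc i).
apply: (@omega_upper R n W lam s x0 _ HW Hl _ Has tk Htk i) (Hc i).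
move=> j; by rewrite [X in _ <= X](bigD1 j) //= le_max lexx.
Qed.
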